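(* Let $M$ be a finite abelian group and $i\colon\hat{M}\to\hat{M}$ a bijection with $i(x)=x\,i(x^{-1})$ for all $x\in\hat{M}$. Define $x\oplus y=x\,i(x/y)^{-1}$ for $x,y\in\hat{M}$. Then: (a) $\oplus$ is commutative; (b) $z(x\oplus y)=(zx)\oplus(zy)$ for all $x,y,z\in\hat{M}$; (c) $\oplus$ is cancellative, i.e., $x\oplus y=x\oplus z$ implies $y=z$.
   Context: $\hat{M}$ is the Pontryagin dual of $M$, written multiplicatively. *)

(* Defs.v *)
(* Pontryagin dual of a finite abelian group G, realised as
   the group of homomorphisms G -> unit circle of algC (extended by 1 outside G). *)
From mathcomp Require Import all_boot all_order all_algebra all_fingroup all_field.
Set Implicit Arguments. Unset Strict Implicit. Unset Printing Implicit Defensive.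
Import GRing.Theory Num.Theory.
Local Open Scope ring_scope.

Section Dual.
Variables (gT : finGroupType) (G : {group gT}).

Definition dualb (f : {ffun gT -> algC}) : bool :=
  [&& [forall x in G, `|f x| == 1],
      [forall x in G, forall y in G, f (x * y)%g == f x * f y] &
      [forall x, (x \notin G) ==> (f x == 1)]].

Definition dual := {f : {ffun gT -> algC} | dualb f}.

Lemma dualb_mul (f g : dual) : dualb [ffun x => sval f x * sval g x].
Proof.
case: f => f /= Hf; case: g => g /= Hg.
move: Hf Hg => /and3P[/forallP f1 /forallP f2 /forallP f3] /and3P[/forallP g1 /forallP g2 /forallP g3].
apply/and3P; split.
- apply/forallP=> x; apply/implyP=> xG; rewrite ffunE normrM.
  by rewrite (eqP (implyP (f1 x) xG)) (eqP (implyP (g1 x) xG)) mulr1.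
- apply/forallP=> x; apply/implyP=> xG; apply/forallP=> y; apply/implyP=> yG.
  rewrite !ffunE.
  have Fx := forallP (implyP (f2 x) xG) y; have Gx := forallP (implyP (g2 x) xG) y.
  by rewrite (eqP (implyP Fx yG)) (eqP (implyP Gx yG)) mulrACA.
- apply/forallP=> x; apply/implyP=> xG; rewrite ffunE.
  by rewrite (eqP (implyP (f3 x) xG)) (eqP (implyP (g3 x) xG)) mulr1.
Qed.

Lemma dualb_inv (f : dual) : dualb [ffun x => (sval f x)^-1].
Proof.
case: f => f /= Hf; move: Hf => /and3P[/forallP f1 /forallP f2 /forallP f3].
apply/and3P; split.
- apply/forallP=> x; apply/implyP=> xG; rewrite ffunE normfV.
  by rewrite (eqP (implyP (f1 x) xG)) invr1.
- apply/forallP=> x; apply/implyP=> xG; apply/forallP=> y; apply/implyP=> yG.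
  rewrite !ffunE.
  have Fx := forallP (implyP (f2 x) xG) y.
  by rewrite (eqP (implyP Fx yG)) invfM.
- apply/forallP=> x; apply/implyP=> xG; rewrite ffunE.
  by rewrite (eqP (implyP (f3 x) xG)) invr1.
Qed.

Definition dmul (f g : dual) : dual := exist (@dualb) _ (dualb_mul f g).
Definition dinv (f : dual) : dual := exist (@dualb) _ (dualb_inv f).
Definition ddiv (f g : dual) : dual := dmul f (dinv g).

End Dual.

(* Main.v *)
Require Import Defs.
From mathcomp Require Import all_boot all_order all_algebra all_fingroup all_field.
From mathcomp Require Import ring.
Import GRing.Theory Num.Theory.
Local Open Scope ring_scope.

Section H.
Variables (gT : finGroupType) (M : {group gT}).

Lemma dual_eq (f g : dual M) : (forall t, sval f t = sval g t) -> f = g.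
Proof.
case: f g => f Hf [g Hg] /= E.
have efg : f = g by apply/ffunP => t; exact: E.
subst g; congr exist; exact: bool_irrelevance.
Qed.

Lemma dmulE (f g : dual M) t : sval (dmul f g) t = sval f t * sval g t.
Proof. by rewrite /= ffunE. Qed.

Lemma dinvE (f : dual M) t : sval (dinv f) t = (sval f t)^-1.
Proof. by rewrite /= ffunE. Qed.

Lemma dnz (f : dual M) t : sval f t != 0.
Proof.
case: f => f /and3P[/forallP f1 _ /forallP f3] /=.
case: (boolP (t \in M)) => tM.
  by rewrite -normr_eq0 (eqP (implyP (f1 t) tM)) oner_eq0.
by rewrite (eqP (implyP (f3 t) tM)) oner_eq0.
Qed.
End H.

Theorem mainTheorem14 (gT : finGroupType) (M : {group gT}) (abM : abelian M)
  (i : dual M -> dual M) (ibij : bijective i)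
  (hi : forall x : dual M, i x = dmul x (i (dinv x))) :
  let oplus := fun x y : dual M => dmul x (dinv (i (ddiv x y))) in
  (forall x y, oplus x y = oplus y x) /\
  (forall x y z, dmul z (oplus x y) = oplus (dmul z x) (dmul z y)) /\
  (forall x y z, oplus x y = oplus x z -> y = z).
Proof.
move=> oplus; rewrite /oplus /ddiv.
have iinj := bij_inj ibij.
split; last split.
- move=> x y.
  have H : i (dmul x (dinv y)) = dmul (dmul x (dinv y)) (i (dmul y (dinv x))).
    rewrite {1}hi; congr (dmul _ (i _)); apply: dual_eq => t.
    rewrite !(dmulE, dinvE) invfM invrK mulrC //.
  apply: dual_eq => t; rewrite H !(dmulE, dinvE).
  have := @dnz _ _ (x) t; have := @dnz _ _ (y) t; have := @dnz _ _ (i (dmul y (dinv x))) t.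
  move=> h1 h2 h3; field; rewrite ?h1 ?h2 ?h3 //.
- move=> x y z.
  have -> : dmul (dmul z x) (dinv (dmul z y)) = dmul x (dinv y).
    apply: dual_eq => t; rewrite !(dmulE, dinvE).
    have := @dnz _ _ (z) t => h; field; rewrite ?h ?dnz //.
  by apply: dual_eq => t; rewrite !(dmulE, dinvE) mulrA.
- move=> x y z E.
  have E2 : i (dmul x (dinv y)) = i (dmul x (dinv z)).
    apply: dual_eq => t.
    have := congr1 (fun f : dual M => sval f t) E; rewrite !(dmulE, dinvE).
    by move/(mulfI (@dnz _ _ (x) t))/invr_inj.
  have E3 := iinj _ _ E2.
  apply: dual_eq => t.
  have := congr1 (fun f : dual M => sval f t) E3; rewrite !(dmulE, dinvE).
  by move/(mulfI (@dnz _ _ (x) t))/invr_inj.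
Qed.
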